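(* Let $\mathcal{H}=(V,\mathcal{A})$ be a HyTN (possibly containing both multi-head and multi-tail hyperarcs) all of whose weights are integers, and suppose $\mathcal{H}$ is consistent. Let $T=\sum_{A\in\mathcal{A}}\sum_{v} |w_A(v)|$, where for each hyperarc $A$ the inner sum ranges over the nodes $v$ at which $w_A$ is defined (the heads of a multi-head hyperarc, the tails of a multi-tail hyperarc). Then $\mathcal{H}$ admits a feasible scheduling $s:V\to\{-T,-T+1,\ldots,T-1,T\}$ (in particular an integral one).
   Context: A Hyper Temporal Network (HyTN) is a pair $\mathcal{H}=(V,\mathcal{A})$ with $V$ a finite set of nodes (timepoints) and $\mathcal{A}$ a finite set of hyperarcs. Each hyperarc is either multi-head or multi-tail. A multi-head hyperarc $A=(t_A,H_A,w_A)$ has a tail $t_A\in V$, a nonempty head set $H_A\subseteq V\setminus\{t_A\}$ and weights $w_A(v)\in\mathbb{R}$ for $v\in H_A$. A multi-tail hyperarc $A=(T_A,h_A,w_A)$ has a head $h_A\in V$, a nonempty tail set $T_A\subseteq V\setminus\{h_A\}$ and weights $w_A(v)\in\mathbb{R}$ for $v\in T_A$. A hyperarc with exactly one head (resp. one tail) is a standard arc $(t,h,w)$. A scheduling $s:V\to\mathbb{R}$ is feasible if: for every standard arc $(t,h,w)$, $s(h)-s(t)\le w$; for every multi-head hyperarc $A$, $s(t_A)\ge\min_{v\in H_A}\{s(v)-w_A(v)\}$; for every multi-tail hyperarc $A$, $s(h_A)\le\max_{v\in T_A}\{s(v)+w_A(v)\}$. $\mathcal{H}$ is consistent if it admits a feasible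 scheduling. *)

(* Defs.v *)
From Stdlib Require Import Reals ZArith List.
Import ListNotations.
Open Scope R_scope.

(* A hyperarc over node type V.  Weights are real; the weight function
   w_A is represented as a list of (node, weight) pairs over the head set
   (multi-head) resp. the tail set (multi-tail). *)
Inductive hyperarc (V : Type) : Type :=
| MultiHead (t : V) (H : list (V * R))
| MultiTail (T : list (V * R)) (h : V).

Arguments MultiHead {V} t H.
Arguments MultiTail {V} T h.

Definition wf_hyperarc {V : Type} (A : hyperarc V) : Prop :=
  match A with
  | MultiHead t H => H <> [] /\ NoDup (map fst H) /\ ~ In t (map fst H)
  | MultiTail T h => T <> [] /\ NoDup (map fst T) /\ ~ In h (map fst T)
  end.

Definition HyTN {V : Type} (Vl : list V) (As : list (hyperarc V)) : Prop :=
  (forall v : V, In v Vl) /\ Forall wf_hyperarc As.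

Definition arc_weights {V : Type} (A : hyperarc V) : list (V * R) :=
  match A with
  | MultiHead _ H => H
  | MultiTail T _ => T
  end.

(* Feasibility of s for one hyperarc.
   multi-head: s(t) >= min_{v in H} (s v - w v), i.e. some head attains it;
   multi-tail: s(h) <= max_{v in T} (s v + w v).
   For a single head/tail this is exactly s(h) - s(t) <= w. *)
Definition sat_hyperarc {V : Type} (s : V -> R) (A : hyperarc V) : Prop :=
  match A with
  | MultiHead t H => exists p, In p H /\ s t >= s (fst p) - snd p
  | MultiTail T h => exists p, In p T /\ s h <= s (fst p) + snd p
  end.

Definition feasible {V : Type} (As : list (hyperarc V)) (s : V -> R) : Prop :=
  forall A, In A As -> sat_hyperarc s A.

Definition consistent {V : Type} (As : list (hyperarc V)) : Prop :=
  exists s : V -> R, feasible As s.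

Definition integer_weights {V : Type} (As : list (hyperarc V)) : Prop :=
  forall A p, In A As -> In p (arc_weights A) -> exists z : Z, snd p = IZR z.

Definition total_abs_weight {V : Type} (As : list (hyperarc V)) : R :=
  fold_right Rplus 0
    (map (fun A => fold_right Rplus 0 (map (fun p => Rabs (snd p)) (arc_weights A))) As).

(* Main.v *)
Require Import Defs.
From Stdlib Require Import Reals ZArith List Lia Lra Classical.
Open Scope R_scope.

Definition sat_c {V : Type} (s : V -> Z) (e : V * V * Z) : Prop :=
  match e with (a, b, w) => (s b - s a <= w)%Z end.

Definition sumabs {V : Type} (C : list (V * V * Z)) : Z :=
  fold_right (fun e acc => (Z.abs (snd e) + acc)%Z) 0%Z C.

Definition sumZ {V : Type} (s : V -> Z) (l : list V) : Z :=
  fold_right (fun x acc => (s x + acc)%Z) 0%Z l.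

Lemma sumabs_cons {V} (x : V*V*Z) C : sumabs (x :: C) = (Z.abs (snd x) + sumabs C)%Z.
Proof. reflexivity. Qed.

Lemma sumZ_cons {V} (s : V -> Z) x l : sumZ s (x :: l) = (s x + sumZ s l)%Z.
Proof. reflexivity. Qed.

Lemma sumabs_app {V} (C1 C2 : list (V*V*Z)) : sumabs (C1 ++ C2) = (sumabs C1 + sumabs C2)%Z.
Proof. induction C1; simpl app; [reflexivity| rewrite !sumabs_cons, IHC1; lia]. Qed.

Lemma sumabs_nonneg {V} (C : list (V*V*Z)) : (0 <= sumabs C)%Z.
Proof. induction C; [simpl; lia| rewrite sumabs_cons; lia]. Qed.

Lemma cover {V} (s : V -> Z) : forall n (C : list (V*V*Z)), (length C <= n)%nat ->
  forall m M, (forall c, (m < c <= M)%Z -> exists a b w, In (a,b,w) C /\ (s b < c <= s a)%Z /\ (s a - s b <= Z.abs w)%Z) ->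
  (M - m <= sumabs C)%Z.
Proof.
  induction n as [|n IH]; intros C Hlen m M Hcov.
  - destruct (Z_le_dec M m). { pose proof (sumabs_nonneg C); lia. }
    destruct (Hcov M) as (a&b&w&Hin&_); [lia|]. destruct C; simpl in *; [contradiction| lia].
  - destruct (Z_le_dec M m). { pose proof (sumabs_nonneg C); lia. }
    destruct (Hcov M) as (a&b&w&Hin&H1&H2); [lia|].
    destruct (in_split _ _ Hin) as (C1&C2&->).
    assert (Hrec: (s b - m <= sumabs (C1 ++ C2))%Z).
    { apply (IH (C1 ++ C2)).
      - rewrite length_app in *; simpl in Hlen; lia.
      - intros c Hc. destruct (Hcov c) as (a'&b'&w'&Hin'&H1'&H2'); [lia|].
        exists a', b', w'. split; [|split; assumption].
        apply in_app_or in Hin'. destruct Hin' as [Hin'|[Heq|Hin']].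
        + apply in_or_app; left; assumption.
        + inversion Heq; subst. lia.
        + apply in_or_app; right; assumption. }
    rewrite sumabs_app in *. rewrite sumabs_cons. simpl snd. lia.
Qed.

Lemma sumZ_nonneg {V} (s : V -> Z) l : (forall v, 0 <= s v)%Z -> (0 <= sumZ s l)%Z.
Proof. intros H; induction l; [simpl; lia| rewrite sumZ_cons; specialize (H a); lia]. Qed.

Lemma sumZ_le {V} (s s' : V -> Z) l : (forall x, s' x <= s x)%Z -> (sumZ s' l <= sumZ s l)%Z.
Proof. intros H; induction l; [simpl; lia| rewrite !sumZ_cons; specialize (H a); lia]. Qed.

Lemma sumZ_lt {V} (s s' : V -> Z) v l : (forall x, s' x <= s x)%Z -> In v l -> (s' v < s v)%Z -> (sumZ s' l < sumZ s l)%Z.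
Proof.
  intros Hle Hin Hlt. induction l as [|x l IH]; [destruct Hin|].
  rewrite !sumZ_cons. destruct Hin as [->|Hin].
  - pose proof (sumZ_le s s' l Hle). lia.
  - specialize (Hle x). specialize (IH Hin). lia.
Qed.

Lemma lower_step {V} (Vl : list V) (C : list (V*V*Z)) (s : V -> Z) :
  (forall v, In v Vl) ->
  (forall v, 0 <= s v)%Z -> (forall e, In e C -> sat_c s e) ->
  (forall v, s v <= sumabs C)%Z \/
  exists s', (forall v, 0 <= s' v)%Z /\ (forall e, In e C -> sat_c s' e) /\ (sumZ s' Vl < sumZ s Vl)%Z.
Proof.
  intros Hall Hnn Hsat.
  destruct (classic (forall v, (s v <= sumabs C)%Z)) as [H|H]; [left; exact H| right].
  apply not_all_ex_not in H. destruct H as [v Hv].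
  assert (Hc: exists c, (0 < c <= s v)%Z /\ forall a b w, In (a,b,w) C -> ~ ((s b < c <= s a)%Z /\ (s b - s a = w)%Z)).
  { apply NNPP. intro Hno. apply Hv.
    assert (Hcv: (s v - 0 <= sumabs C)%Z).
    { apply (cover s (length C) C (le_n _)). intros c Hc.
      apply NNPP. intro Hn. apply Hno. exists c. split; [exact Hc|].
      intros a b w Hin [H1 H2]. apply Hn. exists a, b, w. split; [exact Hin|]. split; [exact H1|]. lia. }
    lia. }
  destruct Hc as (c & Hc & Hub).
  exists (fun x => if Z_le_dec c (s x) then (s x - 1)%Z else s x).
  split; [|split].
  - intro x. specialize (Hnn x). destruct (Z_le_dec c (s x)); lia.
  - intros [[a b] w] Hin. specialize (Hsat _ Hin). specialize (Hub a b w Hin). simpl in *.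
    destruct (Z_le_dec c (s a)); destruct (Z_le_dec c (s b)); try lia.
  - apply (sumZ_lt s _ v); [| apply Hall | ].
    + intro x. destruct (Z_le_dec c (s x)); lia.
    + destruct (Z_le_dec c (s v)); lia.
Qed.

Lemma lower_all {V} (Vl : list V) (C : list (V*V*Z)) :
  (forall v, In v Vl) -> forall n (s : V -> Z), (sumZ s Vl <= Z.of_nat n)%Z ->
  (forall v, 0 <= s v)%Z -> (forall e, In e C -> sat_c s e) ->
  exists s', (forall v, 0 <= s' v <= sumabs C)%Z /\ (forall e, In e C -> sat_c s' e).
Proof.
  intros Hall n. induction n as [|n IH]; intros s Hsum Hnn Hsat;
  destruct (lower_step Vl C s Hall Hnn Hsat) as [H|(s'&H1&H2&H3)].
  - exists s; split; [intro v; split; auto | exact Hsat].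
  - pose proof (sumZ_nonneg s' Vl H1). lia.
  - exists s; split; [intro v; split; auto | exact Hsat].
  - apply (IH s'); auto. lia.
Qed.

Lemma Rabs_in_sum {V} (p : V * R) l : In p l -> Rabs (snd p) <= fold_right Rplus 0 (map (fun p => Rabs (snd p)) l).
Proof.
  induction l as [|x l IH]; simpl; [tauto|]. intros [->|Hin].
  - assert (0 <= fold_right Rplus 0 (map (fun p : V * R => Rabs (snd p)) l)).
    { clear. induction l; simpl; [lra| pose proof (Rabs_pos (snd a)); lra]. }
    lra.
  - specialize (IH Hin). pose proof (Rabs_pos (snd x)). lra.
Qed.

Lemma total_cons {V} (A : hyperarc V) As : total_abs_weight (A :: As) =
  fold_right Rplus 0 (map (fun p => Rabs (snd p)) (arc_weights A)) + total_abs_weight As.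
Proof. reflexivity. Qed.

Lemma build_C {V} (As : list (hyperarc V)) (s0 : V -> R) :
  feasible As s0 -> integer_weights As ->
  exists C : list (V*V*Z),
    (forall a b w, In (a,b,w) C -> s0 b - s0 a <= IZR w) /\
    (forall s : V -> Z, (forall e, In e C -> sat_c s e) -> feasible As (fun v => IZR (s v))) /\
    IZR (sumabs C) <= total_abs_weight As.
Proof.
  induction As as [|A As IH]; intros Hf Hi.
  - exists nil. split; [simpl; tauto|split].
    + intros s _ A [].
    + simpl. unfold total_abs_weight; simpl. lra.
  - destruct IH as (C & HC1 & HC2 & HC3).
    + intros A' HA'. apply Hf. right; exact HA'.
    + intros A' p HA' Hp. apply (Hi A' p); [right; exact HA'| exact Hp].
    + assert (HA : sat_hyperarc s0 A) by (apply Hf; left; reflexivity).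
      assert (Hbound : forall p, In p (arc_weights A) -> Rabs (snd p) <= fold_right Rplus 0 (map (fun p => Rabs (snd p)) (arc_weights A))) by (intros; apply Rabs_in_sum; assumption).
      assert (Hi' : forall p, In p (arc_weights A) -> exists z : Z, snd p = IZR z) by (intros p Hp; apply (Hi A p); [left; reflexivity| exact Hp]).
      rewrite total_cons.
      destruct A as [t H | T h]; simpl in HA, Hbound, Hi' |- *; destruct HA as (p & Hp & Hsp);
      destruct (Hi' p Hp) as [z Hz]; rewrite Hz in Hsp; pose proof (Hbound p Hp) as Hb; rewrite Hz in Hb.
      * exists ((t, fst p, z) :: C). split; [|split].
        -- intros a b w [Heq|Hin]; [inversion Heq; subst; lra | apply HC1; exact Hin].
        -- intros s Hs A' [<-|HA'].
           ++ simpl. exists p. split; [exact Hp|]. pose proof (Hs _ (or_introl eq_refl)) as Hc. simpl in Hc.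
              apply IZR_le in Hc. rewrite minus_IZR in Hc. rewrite Hz. lra.
           ++ apply (HC2 s); [intros e He; apply Hs; right; exact He | exact HA'].
        -- rewrite sumabs_cons, plus_IZR. simpl snd. rewrite abs_IZR. lra.
      * exists ((fst p, h, z) :: C). split; [|split].
        -- intros a b w [Heq|Hin]; [inversion Heq; subst; lra | apply HC1; exact Hin].
        -- intros s Hs A' [<-|HA'].
           ++ simpl. exists p. split; [exact Hp|]. pose proof (Hs _ (or_introl eq_refl)) as Hc. simpl in Hc.
              apply IZR_le in Hc. rewrite minus_IZR in Hc. rewrite Hz. lra.
           ++ apply (HC2 s); [intros e He; apply Hs; right; exact He | exact HA'].
        -- rewrite sumabs_cons, plus_IZR. simpl snd. rewrite abs_IZR. lra.
Qed.

Lemma up_mono (x y : R) (w : Z) : x <= y + IZR w -> (up x <= up y + w)%Z.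
Proof.
  intros H. destruct (archimed x) as [Hx1 Hx2]. destruct (archimed y) as [Hy1 Hy2].
  destruct (Z_le_dec (up x) (up y + w)) as [|Hn]; [assumption|exfalso].
  assert (Hge : (up y + w + 1 <= up x)%Z) by lia.
  apply IZR_le in Hge. rewrite !plus_IZR in Hge. lra.
Qed.

Lemma lower_bound {V} (f : V -> Z) l : exists m, forall v, In v l -> (m <= f v)%Z.
Proof.
  induction l as [|x l IH]; [exists 0%Z; intros v []|].
  destruct IH as [m Hm]. exists (Z.min m (f x)). intros v [<-|Hv]; [lia| specialize (Hm v Hv); lia].
Qed.

Theorem lemma1 (V : Type) (Vl : list V) (As : list (hyperarc V)) :
  HyTN Vl As ->
  integer_weights As ->
  consistent As ->
  exists s : V -> Z,
    feasible As (fun v => IZR (s v)) /\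
    (forall v : V, - total_abs_weight As <= IZR (s v) <= total_abs_weight As).
Proof.
  intros [Hall _] Hi [s0 Hf].
  destruct (build_C As s0 Hf Hi) as (C & HC1 & HC2 & HC3).
  pose (s1 := fun v => up (s0 v)).
  assert (Hs1 : forall e, In e C -> sat_c s1 e).
  { intros [[a b] w] Hin. simpl. unfold s1. specialize (HC1 a b w Hin).
    pose proof (up_mono (s0 b) (s0 a) w ltac:(lra)). lia. }
  destruct (lower_bound s1 Vl) as [m Hm].
  pose (s2 := fun v => (s1 v - m)%Z).
  assert (Hnn : forall v, (0 <= s2 v)%Z).
  { intro v. unfold s2. specialize (Hm v (Hall v)). lia. }
  destruct (lower_all Vl C Hall (Z.to_nat (sumZ s2 Vl)) s2) as (s' & Hb & Hs').
  - pose proof (sumZ_nonneg s2 Vl Hnn). lia.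
  - exact Hnn.
  - intros [[a b] w] Hin. specialize (Hs1 _ Hin). unfold s2; simpl in *. lia.
  - exists s'. split.
    + intros A HA. apply (HC2 s' Hs' A HA).
    + intros v. specialize (Hb v). destruct Hb as [Hb1 Hb2]. apply IZR_le in Hb1, Hb2.
      pose proof (sumabs_nonneg C) as H0. apply IZR_le in H0. lra.
Qed.
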